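(* Let $f(y_1,y_2,y_3)$ be any real ternary cubic form. Let $G$ be the $3\times3$ matrix with entries $$G_{ij}=\frac{\partial f}{\partial y_i}\frac{\partial f}{\partial y_j}-f\,\frac{\partial^2 f}{\partial y_i\partial y_j}$$ (which equals $-f^2\partial^2(\log f)/\partial y_i\partial y_j$ where $f\neq0$). Let $H=\det(\partial^2 f/\partial y_i\partial y_j)$ be the Hessian determinant of $f$. Then, as an identity of polynomials in $y$, $$\det G=\tfrac12 f^3H.$$ *)

(* Defs.v *)
(* Polynomials in y1,y2,y3 are represented as the iterated
   univariate polynomial ring R[y1][y2][y3] = {poly {poly {poly R}}}. *)
From HB Require Import structures.
From mathcomp Require Import all_boot all_order all_algebra.
Set Implicit Arguments. Unset Strict Implicit. Unset Printing Implicit Defensive.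
Import Order.TTheory GRing.Theory Num.Theory.
Local Open Scope ring_scope.

Notation poly3 R := {poly {poly {poly R}}}.

Definition cst3 {R : nzRingType} (a : R) : poly3 R := a%:P%:P%:P.

Definition var3 {R : nzRingType} (i : 'I_3) : poly3 R :=
  match val i with
  | 0 => ('X%:P)%:P
  | 1 => 'X%:P
  | _ => 'X
  end.

Definition pderiv3 {R : nzRingType} (i : 'I_3) (p : poly3 R) : poly3 R :=
  match val i with
  | 0 => map_poly (map_poly deriv) p
  | 1 => map_poly deriv p
  | _ => deriv p
  end.

Definition cubic_form {R : nzRingType} (f : poly3 R) : Prop :=
  exists c : 'I_3 -> 'I_3 -> 'I_3 -> R,
    f = \sum_(i < 3) \sum_(j < 3) \sum_(k < 3) cst3 (c i j k) * var3 i * var3 j * var3 k.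

(* Main.v *)
Require Import Defs.
From HB Require Import structures.
From mathcomp Require Import all_boot all_order all_algebra.
From Stdlib Require Import Ring.
Import Order.TTheory GRing.Theory Num.Theory.
Local Open Scope ring_scope.

Section RingSetup.
Variable A : comNzRingType.
Definition T : Type := A.
Definition addT (x y : T) : T := (x : A) + y.
Definition mulT (x y : T) : T := (x : A) * y.
Definition oppT (x : T) : T := - (x : A).
Definition subT (x y : T) : T := (x : A) - y.
Definition zT : T := (0 : A).
Definition oT : T := (1 : A).
Lemma Tth : @ring_theory T zT oT addT mulT subT oppT eq.
Proof. split; rewrite /addT /mulT /subT /oppT /zT /oT.
 exact: add0r. exact: addrC. exact: addrA. exact: mul1r. exact: mulrC. exact: mulrA. exact: mulrDl. by []. exact: subrr.
Qed.
Lemma addE (x y : A) : x + y = addT x y. Proof. by []. Qed.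
Lemma mulE (x y : A) : x * y = mulT x y. Proof. by []. Qed.
Lemma oppE (x : A) : - x = oppT x. Proof. by []. Qed.
Lemma zE : (0 : A) = zT. Proof. by []. Qed.
Lemma oE : (1 : A) = oT. Proof. by []. Qed.
End RingSetup.

Section Gen.
Variable A : comNzRingType.
Add Ring Tring : (Tth A).
Ltac rg := rewrite ?expr2 ?exprS ?expr0 ?(@addE A) ?(@mulE A) ?(@oppE A) ?(@zE A) ?(@oE A);
  match goal with |- ?l = ?r => change (@eq (T A) l r) end; ring.

Lemma det3 (F : nat -> nat -> A) : \det (\matrix_(i < 3, j < 3) F i j) =
  F 0%N 0%N * (F 1%N 1%N * F 2%N 2%N - F 1%N 2%N * F 2%N 1%N)
  - F 0%N 1%N * (F 1%N 0%N * F 2%N 2%N - F 1%N 2%N * F 2%N 0%N)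
  + F 0%N 2%N * (F 1%N 0%N * F 2%N 1%N - F 1%N 1%N * F 2%N 0%N).
Proof.
rewrite (expand_det_row _ ord0) !big_ord_recl big_ord0 /cofactor.
rewrite !(expand_det_row _ ord0) !big_ord_recl !big_ord0 /cofactor !det_mx11 !mxE /=.
rewrite /bump /= ?addn0 ?add0n ?add1n. rg.
Qed.

Lemma mul3 (F K : nat -> nat -> A) :
  (\matrix_(i < 3, j < 3) F i j) *m (\matrix_(i < 3, j < 3) K i j) =
  \matrix_(i < 3, j < 3) (F i 0%N * K 0%N j + F i 1%N * K 1%N j + F i 2%N * K 2%N j).
Proof.
apply/matrixP => i j; rewrite !mxE !big_ord_recl big_ord0 !mxE /bump /= ?addn0 ?add0n ?add1n.
rg.
Qed.

Lemma eq3 (F K : nat -> nat -> A) :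
  (forall i j, (i < 3)%N -> (j < 3)%N -> F i j = K i j) ->
  \matrix_(i < 3, j < 3) F i j = \matrix_(i < 3, j < 3) K i j.
Proof. by move=> H; apply/matrixP => i j; rewrite !mxE H. Qed.

Lemma detN (f h : A) (y g : nat -> A) :
  let F := fun i j => h * y i * g j - (if (i == j)%N then f else 0) in
  F 0%N 0%N * (F 1%N 1%N * F 2%N 2%N - F 1%N 2%N * F 2%N 1%N)
  - F 0%N 1%N * (F 1%N 0%N * F 2%N 2%N - F 1%N 2%N * F 2%N 0%N)
  + F 0%N 2%N * (F 1%N 0%N * F 2%N 1%N - F 1%N 1%N * F 2%N 0%N)
  = - (f * f * f) + f * f * h * (y 0%N * g 0%N + y 1%N * g 1%N + y 2%N * g 2%N).
Proof. rewrite /=. rg. Qed.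

Lemma fin3 (D f h : A) : h + h = 1 ->
  D * (- (f * f * f) + f * f * h * (f + f + f)) = h * f ^+ 3 * D.
Proof.
move=> hh; transitivity (h * f ^+ 3 * D + (h + h - 1) * (f * f * f * D)); first by rg.
by rewrite hh subrr mul0r addr0.
Qed.

Lemma ent0 (m0 m1 m2 y0 y1 y2 gi gj h f : A) : h + h = 1 ->
  m0 * y0 + m1 * y1 + m2 * y2 = gi + gi ->
  gi * gj - f * m0 = m0 * (h * y0 * gj - f) + m1 * (h * y1 * gj - 0) + m2 * (h * y2 * gj - 0).
Proof.
move=> hh e; transitivity ((h + h) * (gi * gj) - f * m0); first by rewrite hh mul1r.
transitivity (h * gj * (gi + gi) - f * m0); first by rg.
rewrite -e; rg.
Qed.
Lemma ent1 (m0 m1 m2 y0 y1 y2 gi gj h f : A) : h + h = 1 ->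
  m0 * y0 + m1 * y1 + m2 * y2 = gi + gi ->
  gi * gj - f * m1 = m0 * (h * y0 * gj - 0) + m1 * (h * y1 * gj - f) + m2 * (h * y2 * gj - 0).
Proof.
move=> hh e; transitivity ((h + h) * (gi * gj) - f * m1); first by rewrite hh mul1r.
transitivity (h * gj * (gi + gi) - f * m1); first by rg.
rewrite -e; rg.
Qed.
Lemma ent2 (m0 m1 m2 y0 y1 y2 gi gj h f : A) : h + h = 1 ->
  m0 * y0 + m1 * y1 + m2 * y2 = gi + gi ->
  gi * gj - f * m2 = m0 * (h * y0 * gj - 0) + m1 * (h * y1 * gj - 0) + m2 * (h * y2 * gj - f).
Proof.
move=> hh e; transitivity ((h + h) * (gi * gj) - f * m2); first by rewrite hh mul1r.
transitivity (h * gj * (gi + gi) - f * m2); first by rg.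
rewrite -e; rg.
Qed.

Lemma mono3 (c a b d Ec Ea Eb Ed : A) : Ec = 0 -> Ea = a -> Eb = b -> Ed = d ->
  ((Ec * a + c * Ea) * b + c * a * Eb) * d + c * a * b * Ed
  = c * a * b * d + c * a * b * d + c * a * b * d.
Proof. move=> -> -> -> ->; rg. Qed.

Lemma eul2 (a0 a1 a2 b0 b1 b2 y0 y1 y2 m0 m1 m2 g : A) :
  a0 * b0 + a1 * b1 + a2 * b2 = g ->
  (a0 * b0 + y0 * m0) + (a1 * b1 + y1 * m1) + (a2 * b2 + y2 * m2) = g + g + g ->
  m0 * y0 + m1 * y1 + m2 * y2 = g + g.
Proof.
move=> h1 h2.
transitivity ((a0 * b0 + y0 * m0) + (a1 * b1 + y1 * m1) + (a2 * b2 + y2 * m2)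
   - (a0 * b0 + a1 * b1 + a2 * b2)); first by rg.
rewrite h1 h2; rg.
Qed.

Lemma sel0 (a b c : A) : 1 * a + 0 * b + 0 * c = a. Proof. rg. Qed.
Lemma sel1 (a b c : A) : 0 * a + 1 * b + 0 * c = b. Proof. rg. Qed.
Lemma sel2 (a b c : A) : 0 * a + 0 * b + 1 * c = c. Proof. rg. Qed.

Lemma sub_trick (X Y a b : A) : X = Y -> b = X - a -> b = Y - a.
Proof. by move=> -> . Qed.

End Gen.

Section Der.
Variable B : comNzRingType.
Variable D : B -> B.
Hypothesis D0 : D 0 = 0.
Hypothesis DD : forall x y, D (x + y) = D x + D y.
Hypothesis DM : forall x y, D (x * y) = D x * y + x * D y.
Lemma mD0 : map_poly D 0 = 0. Proof. by rewrite map_poly0. Qed.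
Lemma mDD p q : map_poly D (p + q) = map_poly D p + map_poly D q.
Proof. by apply/polyP => i; rewrite coefD !coef_map_id0 // coefD DD. Qed.
Lemma mDM p q : map_poly D (p * q) = map_poly D p * q + p * map_poly D q.
Proof.
apply/polyP => i; rewrite coefD !coef_map_id0 // !coefM (big_morph D DD D0) -big_split.
by apply: eq_bigr => j _; rewrite DM !coef_map_id0.
Qed.
Lemma mDC c : map_poly D c%:P = (D c)%:P.
Proof. by apply/polyP => i; rewrite coef_map_id0 // !coefC; case: ifP. Qed.
Lemma mDX (D1 : D 1 = 0) : map_poly D 'X = 0.
Proof.
apply/polyP => i; rewrite coef_map_id0 // coefX coef0.
by case: (i == 1)%N; rewrite ?mulr1n ?mulr0n.
Qed.
End Der.

Section Main.
Variable R : realFieldType.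
Notation S := {poly R}.
Notation Q := {poly {poly R}}.
Notation P := (poly3 R).

Definition pd (n : nat) (p : P) : P :=
  match n with
  | 0 => map_poly (map_poly deriv) p
  | 1 => map_poly deriv p
  | _ => deriv p
  end.
Definition vr (n : nat) : P :=
  match n with
  | 0 => ('X%:P)%:P
  | 1 => 'X%:P
  | _ => 'X
  end.

Lemma d1_0 : (map_poly (@deriv R) : Q -> Q) 0 = 0. Proof. exact: mD0. Qed.
Lemma d1_D (x y : Q) : map_poly (@deriv R) (x + y) = map_poly deriv x + map_poly deriv y.
Proof. apply: mDD; [exact: deriv0 | exact: derivD]. Qed.
Lemma d1_M (x y : Q) : map_poly (@deriv R) (x * y) = map_poly deriv x * y + x * map_poly deriv y.
Proof. apply: mDM; [exact: deriv0 | exact: derivD | exact: derivM]. Qed.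

Lemma mC1 (c : Q) : map_poly (map_poly (@deriv R)) c%:P = (map_poly (@deriv R) c)%:P.
Proof. apply: mDC; exact: d1_0. Qed.
Lemma mC2 (c : S) : map_poly (@deriv R) c%:P = (deriv c)%:P.
Proof. apply: mDC; exact: deriv0. Qed.
Lemma mC3 (c : Q) : map_poly (@deriv {poly R}) c%:P = (deriv c)%:P :> P.
Proof. apply: mDC; exact: deriv0. Qed.

Lemma pdD n p q : pd n (p + q) = pd n p + pd n q.
Proof.
case: n => [|[|n]] /=.
- apply: mDD; [exact: d1_0 | exact: d1_D].
- apply: mDD; [exact: deriv0 | exact: derivD].
- exact: derivD.
Qed.
Lemma pd0 n : pd n 0 = 0.
Proof. case: n => [|[|n]] /=; rewrite ?map_poly0 ?deriv0 //. Qed.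
Lemma pdM n p q : pd n (p * q) = pd n p * q + p * pd n q.
Proof.
case: n => [|[|n]] /=.
- apply: mDM; [exact: d1_0 | exact: d1_D | exact: d1_M].
- apply: mDM; [exact: deriv0 | exact: derivD | exact: derivM].
- exact: derivM.
Qed.
Lemma pdC n c : pd n (cst3 c) = 0.
Proof.
rewrite /cst3; case: n => [|[|n]] /=.
- by rewrite mC1 mC2 derivC !polyC0.
- by rewrite mC3 derivC polyC0.
- by rewrite derivC.
Qed.
Lemma pdV n m : (n < 3)%N -> (m < 3)%N -> pd n (vr m) = if (n == m)%N then 1 else 0.
Proof.
case: n => [|[|[|n]]] // _; case: m => [|[|[|m]]] // _ /=.
- by rewrite mC1 mC2 derivX !polyC1.
- by rewrite mC1 mDX ?deriv0 // ?polyC0 // -polyC1 derivC.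
- rewrite mDX ?d1_0 //.
  by rewrite -polyC1 mC2 derivC polyC0.
- by rewrite mC3 derivC polyC0.
- by rewrite mC3 derivX polyC1.
- rewrite mDX ?deriv0 //.
  by rewrite -polyC1 derivC.
- by rewrite derivC.
- by rewrite derivC.
- by rewrite derivX.
Qed.

Definition PR : comNzRingType := P.
Add Ring Pring : (Tth PR).
Ltac rgP := rewrite ?expr2 ?exprS ?expr0 ?(@addE PR) ?(@mulE PR) ?(@oppE PR) ?(@zE PR) ?(@oE PR);
  match goal with |- ?l = ?r => change (@eq (T PR) l r) end; ring.

Definition Eu (p : P) : P := vr 0%N * pd 0%N p + vr 1%N * pd 1%N p + vr 2%N * pd 2%N p.
Lemma EuD p q : Eu (p + q) = Eu p + Eu q.
Proof. rewrite /Eu !pdD; rgP. Qed.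
Lemma Eu0 : Eu 0 = 0.
Proof. rewrite /Eu !pd0; rgP. Qed.
Lemma EuM p q : Eu (p * q) = Eu p * q + p * Eu q.
Proof. rewrite /Eu !pdM; rgP. Qed.
Lemma EuC c : Eu (cst3 c) = 0.
Proof. rewrite /Eu !pdC; rgP. Qed.
Lemma EuV m : (m < 3)%N -> Eu (vr m) = vr m.
Proof. move=> hm; rewrite /Eu !pdV //; case: m hm => [|[|[|m]]] //= _; rgP. Qed.
Lemma var3E (i : 'I_3) : var3 i = vr i.
Proof. by []. Qed.
Lemma Eu_mono c (i j k : 'I_3) :
  Eu (cst3 c * var3 i * var3 j * var3 k) =
  cst3 c * var3 i * var3 j * var3 k + cst3 c * var3 i * var3 j * var3 k
  + cst3 c * var3 i * var3 j * var3 k.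
Proof.
rewrite !EuM; apply: mono3; first exact: EuC.
all: rewrite var3E; apply: EuV; exact: ltn_ord.
Qed.

Lemma triple (F : P -> P) (F0 : F 0 = 0) (FD : forall x y, F (x + y) = F x + F y)
  (t : 'I_3 -> 'I_3 -> 'I_3 -> P) :
  F (\sum_(i < 3) \sum_(j < 3) \sum_(k < 3) t i j k)
  = \sum_(i < 3) \sum_(j < 3) \sum_(k < 3) F (t i j k).
Proof.
rewrite (big_morph F FD F0); apply: eq_bigr => i _.
rewrite (big_morph F FD F0); apply: eq_bigr => j _.
exact: (big_morph F FD F0).
Qed.

Lemma EulerE (f : P) : cubic_form f -> Eu f = f + f + f.
Proof.
case=> c ->.
have F0 : (fun x : P => x + x + x) 0 = 0 by rgP.
have FD : forall x y : P, (fun x => x + x + x) (x + y) = (fun x => x + x + x) x + (fun x => x + x + x) y.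
  by move=> x y /=; rgP.
rewrite (@triple Eu Eu0 EuD) (@triple (fun x => x + x + x) F0 FD).
apply: eq_bigr => i _; apply: eq_bigr => j _; apply: eq_bigr => k _.
exact: Eu_mono.
Qed.

Lemma pdVsum (f : P) n : (n < 3)%N ->
  pd n (vr 0%N) * pd 0%N f + pd n (vr 1%N) * pd 1%N f + pd n (vr 2%N) * pd 2%N f = pd n f.
Proof.
case: n => [|[|[|n]]] // _; rewrite !pdV //=; [exact: sel0 | exact: sel1 | exact: sel2].
Qed.

Lemma Euler2 (f : P) n : cubic_form f -> (n < 3)%N ->
  pd n (pd 0%N f) * vr 0%N + pd n (pd 1%N f) * vr 1%N + pd n (pd 2%N f) * vr 2%N = pd n f + pd n f.
Proof.
move=> hf hn; have H := congr1 (pd n) (@EulerE f hf).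
rewrite /Eu !pdD !pdM in H.
apply: eul2; [exact: pdVsum | exact: H].
Qed.

Lemma mainP (f : P) (hf : cubic_form f) :
  \det (\matrix_(i < 3, j < 3)
          (pderiv3 i f * pderiv3 j f - f * pderiv3 i (pderiv3 j f)))
  = cst3 (2^-1 : R) * f ^+ 3 *
    \det (\matrix_(i < 3, j < 3) pderiv3 i (pderiv3 j f)).
Proof.
pose FM := fun n m => pd n (pd m f).
pose FG := fun n m => pd n f * pd m f - f * pd n (pd m f).
pose h := cst3 (2^-1 : R).
pose FN := fun n m => h * vr n * pd m f - (if (n == m)%N then f else 0).
change (\det (\matrix_(i < 3, j < 3) FG i j) = h * f ^+ 3 * \det (\matrix_(i < 3, j < 3) FM i j)).
have hh : h + h = 1.
  have e2 : (2^-1 : R) + 2^-1 = 1 by rewrite {3}(splitr 1) mul1r.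
  by rewrite /h /cst3 -!polyCD e2 !polyC1.
have GMN : \matrix_(i < 3, j < 3) FG i j
   = (\matrix_(i < 3, j < 3) FM i j) *m (\matrix_(i < 3, j < 3) FN i j).
  rewrite mul3; apply: (@eq3 _ FG (fun n m => FM n 0%N * FN 0%N m + FM n 1%N * FN 1%N m + FM n 2%N * FN 2%N m)) => i j hi hj; rewrite /FG /FM /FN.
  have e := @Euler2 f i hf hi.
  case: j hj => [|[|[|j]]] // _ /=.
  - exact: ent0.
  - exact: ent1.
  - exact: ent2.
rewrite GMN det_mulmx !det3.
have dN : FN 0%N 0%N * (FN 1%N 1%N * FN 2%N 2%N - FN 1%N 2%N * FN 2%N 1%N)
  - FN 0%N 1%N * (FN 1%N 0%N * FN 2%N 2%N - FN 1%N 2%N * FN 2%N 0%N)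
  + FN 0%N 2%N * (FN 1%N 0%N * FN 2%N 1%N - FN 1%N 1%N * FN 2%N 0%N)
  = - (f * f * f) + f * f * h * (vr 0%N * pd 0%N f + vr 1%N * pd 1%N f + vr 2%N * pd 2%N f)
  := @detN _ f h vr (fun m => pd m f).
rewrite dN.
have Ef := @EulerE f hf; rewrite /Eu in Ef; rewrite Ef.
exact: fin3.
Qed.

End Main.

Theorem lemma3p5 (R : realFieldType) (f : poly3 R) (hf : cubic_form f) :
  \det (\matrix_(i < 3, j < 3)
          (pderiv3 i f * pderiv3 j f - f * pderiv3 i (pderiv3 j f)))
  = cst3 (2^-1 : R) * f ^+ 3 *
    \det (\matrix_(i < 3, j < 3) pderiv3 i (pderiv3 j f)).
Proof. exact: mainP. Qed.
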